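(* Let $f:\mathcal X\times\mathcal Y\to\{0,1\}$, let $\mu$ be a product distribution on $\mathcal X\times\mathcal Y$, let $\epsilon,\delta\in(0,1)$ and $D>0$ with $\mathrm{srec}^{0,\mu}_{\epsilon,\delta}(f)\le D$. Then for every $\rho\in(0,1)$ there is a rectangle $S$ with $\mu_1(S)\le\rho\,\mu_0(S)$ and $$\mu(S)\ge\mu_0(S)\ge\frac1D\left((1-\epsilon)\mu_0-\frac{\delta}{\rho}\mu_1\right).$$
   Context: A rectangle is $A\times B$ with $A\subseteq\mathcal X,B\subseteq\mathcal Y$; $\mu$ product means $\mu(x,y)=\mu_X(x)\mu_Y(y)$. $\mu_z(R)=\mu(R\cap f^{-1}(z))$, $\mu_z=\mu_z(\mathcal X\times\mathcal Y)$. $\mathrm{srec}^{z,\mu}_{\epsilon,\delta}(f)$ is the optimal value of: minimize $\sum_R w_R$ over $w_R\ge0$ (one per rectangle) subject to $\sum_{(x,y)\in f^{-1}(z)}\mu(x,y)\sum_{R\ni(x,y)}w_R\ge(1-\epsilon)\mu_z$; $\sum_{R\ni(x,y)}w_R\le\delta$ for all $(x,y)\notin f^{-1}(z)$; $\sum_{R\ni(x,y)}w_R\le1$ for all $(x,y)$. *)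

(* Defs.v *)
From HB Require Import structures.
From mathcomp Require Import all_boot all_order all_algebra.
Set Implicit Arguments. Unset Strict Implicit. Unset Printing Implicit Defensive.
Import Order.TTheory GRing.Theory Num.Theory.
Local Open Scope ring_scope.

Section Defs.
Variables (R : realFieldType) (X Y : finType).

Definition is_distr (T : finType) (p : T -> R) : Prop :=
  (forall t, 0 <= p t) /\ \sum_(t : T) p t = 1.

Definition prod_distr (muX : X -> R) (muY : Y -> R) : X * Y -> R :=
  fun xy => muX xy.1 * muY xy.2.

Definition rect (A : {set X}) (B : {set Y}) : {set X * Y} := setX A B.

Definition meas (mu : X * Y -> R) (S : {set X * Y}) : R :=
  \sum_(p in S) mu p.

Definition meas_z (f : X -> Y -> bool) (z : bool) (mu : X * Y -> R)
    (S : {set X * Y}) : R :=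
  \sum_(p in S | f p.1 p.2 == z) mu p.

Definition cover (w : {set X} -> {set Y} -> R) (x : X) (y : Y) : R :=
  \sum_(A : {set X}) \sum_(B : {set Y} | (x \in A) && (y \in B)) w A B.

Definition srec_feasible (f : X -> Y -> bool) (z : bool) (mu : X * Y -> R)
    (eps delta : R) (w : {set X} -> {set Y} -> R) : Prop :=
  [/\ forall A B, 0 <= w A B,
      \sum_(p : X * Y | f p.1 p.2 == z) mu p * cover w p.1 p.2
        >= (1 - eps) * meas_z f z mu setT,
      forall x y, f x y != z -> cover w x y <= delta
    & forall x y, cover w x y <= 1].

Definition srec_value (w : {set X} -> {set Y} -> R) : R :=
  \sum_(A : {set X}) \sum_(B : {set Y}) w A B.

(* srec^{z,mu}_{eps,delta}(f) <= D, where srec is the optimal value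
   (infimum) of the LP: for every D' > D there is a feasible w of value <= D'. *)
Definition srec_le (f : X -> Y -> bool) (z : bool) (mu : X * Y -> R)
    (eps delta D : R) : Prop :=
  forall D', D < D' ->
    exists w, srec_feasible f z mu eps delta w /\ srec_value w <= D'.
End Defs.

(* Main.v *)
Require Import Defs.
From HB Require Import structures.
From mathcomp Require Import all_boot all_order all_algebra.
From mathcomp Require Import lra ring.
Import Order.TTheory GRing.Theory Num.Theory.
Local Open Scope ring_scope.
Section S.
Variables (R : realFieldType) (X Y : finType) (f : X -> Y -> bool) (mu : X * Y -> R).
Lemma swap (z : bool) (w : {set X} -> {set Y} -> R) :
  \sum_(p : X * Y | f p.1 p.2 == z) mu p * Defs.cover w p.1 p.2 =
  \sum_(A : {set X}) \sum_(B : {set Y}) w A B * meas_z f z mu (rect A B).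
Proof.
pose F (p : X * Y) (A : {set X}) (B : {set Y}) := if [&& f p.1 p.2 == z, p.1 \in A & p.2 \in B] then mu p * w A B else 0.
transitivity (\sum_p \sum_A \sum_B F p A B).
  rewrite big_mkcond; apply: eq_bigr => p _; rewrite /Defs.cover /F.
  case: ifP => hz /=; last by rewrite big1 // => A _; rewrite big1.
  rewrite mulr_sumr; apply: eq_bigr => A _; rewrite mulr_sumr big_mkcond.
  by apply: eq_bigr => B _; case: ifP => //; rewrite mulr0.
rewrite exchange_big; apply: eq_bigr => A _; rewrite exchange_big; apply: eq_bigr => B _.
rewrite /meas_z mulr_sumr [RHS]big_mkcond /=; apply: eq_bigr => p _.
rewrite /F /rect; case: p => x y /=; rewrite in_setX /=; case: (f x y == z); case: (x \in A); case: (y \in B) => //=;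
  by rewrite ?mulr0 // mulrC.
Qed.
Lemma exmax (I : finType) (i0 : I) (g : I -> R) : exists p, forall q, g q <= g p.
Proof. by case: (@arg_maxP _ R I i0 xpredT g isT) => p _ H; exists p => q; exact: H. Qed.
End S.

Theorem mainTheorem5 (R : realFieldType) (X Y : finType)
    (f : X -> Y -> bool) (muX : X -> R) (muY : Y -> R)
    (eps delta D : R) :
  is_distr muX -> is_distr muY ->
  0 < eps < 1 -> 0 < delta < 1 -> 0 < D ->
  srec_le f false (prod_distr muX muY) eps delta D ->
  forall rho : R, 0 < rho < 1 ->
  exists (A : {set X}) (B : {set Y}),
    let mu := prod_distr muX muY in
    let S := rect A B in
    meas_z f true mu S <= rho * meas_z f false mu S /\
    meas_z f false mu S <= meas mu S /\
    D^-1 * ((1 - eps) * meas_z f false mu setT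
            - delta / rho * meas_z f true mu setT)
      <= meas_z f false mu S.
Proof.
move=> [hX _] [hY _] /andP[he0 he1] /andP[hd0 hd1] hD hsrec rho /andP[hr0 hr1].
set mu := prod_distr muX muY.
have mu0 : forall p, 0 <= mu p by move=> p; rewrite /mu /prod_distr mulr_ge0.
have mz0 : forall z S, 0 <= meas_z f z mu S by move=> z S; apply: sumr_ge0.
pose g (AB : {set X} * {set Y}) :=
  meas_z f false mu (rect AB.1 AB.2) - rho^-1 * meas_z f true mu (rect AB.1 AB.2).
have [p hp] := @exmax _ _ (set0, set0) g.
set M := g p.
have g00 : g (set0, set0) = 0.
  rewrite /g /meas_z /rect /= !big1 ?mulr0 ?subr0 // => q; by rewrite !inE.
have M0 : 0 <= M by rewrite -g00 hp.
set T := (1 - eps) * meas_z f false mu setT - delta / rho * meas_z f true mu setT.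
have key : forall e, 0 < e -> T <= M * (D + e).
  move=> e he.
  have hDe : D < D + e by rewrite ltrDl.
  have [w [[w0 hcov hdel h1] hv]] := hsrec _ hDe.
  have s0 := @swap _ _ _ f mu false w; have s1 := @swap _ _ _ f mu true w.
  have hb1 : \sum_(q : X * Y | f q.1 q.2 == true) mu q * Defs.cover w q.1 q.2
       <= delta * meas_z f true mu setT.
    rewrite /meas_z mulr_sumr.
    rewrite [in X in _ <= X](eq_bigl (fun q : X * Y => f q.1 q.2 == true)); last by move=> q; rewrite ?inE.
    apply: ler_sum => q hq; rewrite mulrC ler_wpM2r //; apply: hdel.
    by move/eqP: hq => ->.
  rewrite s0 in hcov; rewrite s1 in hb1.
  have E : \sum_(A : {set X}) \sum_(B : {set Y}) w A B * g (A, B) =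
     \sum_(A : {set X}) \sum_(B : {set Y}) w A B * meas_z f false mu (rect A B)
     - rho^-1 * \sum_(A : {set X}) \sum_(B : {set Y}) w A B * meas_z f true mu (rect A B).
    rewrite mulr_sumr -sumrB; apply: eq_bigr => A _.
    rewrite mulr_sumr -sumrB; apply: eq_bigr => B _.
    by rewrite /g /=; ring.
  have U : \sum_(A : {set X}) \sum_(B : {set Y}) w A B * g (A, B) <= M * (D + e).
    apply: le_trans (_ : M * srec_value w <= _); last by rewrite ler_wpM2l.
    rewrite /srec_value mulr_sumr; apply: ler_sum => A _.
    rewrite mulr_sumr; apply: ler_sum => B _.
    by rewrite mulrC ler_wpM2r.
  apply: le_trans U; rewrite E /T.
  have hr : 0 < rho^-1 by rewrite invr_gt0.
  have := ler_wpM2l (ltW hr) hb1.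
  rewrite mulrA (mulrC rho^-1) -/(delta / rho).
  move: hcov; lra.
have TM : T <= M * D.
  rewrite leNgt; apply/negP => H.
  have c0 : 0 < T - M * D by rewrite subr_gt0.
  have hM1 : 0 < M + 1 by lra.
  have e0 : 0 < (T - M * D) / (M + 1) by rewrite divr_gt0.
  have := key _ e0.
  have : M * ((T - M * D) / (M + 1)) < T - M * D.
    rewrite mulrA ltr_pdivrMr //; nra.
  lra.
clear key; case: p @M hp M0 TM => A B M hp M0 TM.
exists A, B => /=.
have m1 := mz0 true (rect A B); have m0 := mz0 false (rect A B).
have hr : 0 < rho^-1 by rewrite invr_gt0.
have gdef : M = meas_z f false mu (rect A B) - rho^-1 * meas_z f true mu (rect A B) by [].
split; [|split].
- have : rho^-1 * meas_z f true mu (rect A B) <= meas_z f false mu (rect A B) by lra.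
  by rewrite -ler_pdivlMl // invrK.
- rewrite /meas_z /meas big_mkcondr /= big_mkcond /= [X in _ <= X]big_mkcond /=.
  apply: ler_sum => q _; case: (q \in rect A B) => //; case: ifP => //.
- have : M <= meas_z f false mu (rect A B) by nra.
  apply: le_trans; rewrite ler_pdivrMl // (mulrC D); exact: TM.
Qed.
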